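(* There exists an absolute constant $m_0$ such that the following holds for every integer $m\ge m_0$. Let $q=2^m$ and $a,b\in\mathbb{F}_{q^2}$, and let $P_1(x)=ax^{q+1}+bx^{2(q+1)}\in\mathbb{F}_{q^2}[x]$. Then $P_1$ is a planar function on $\mathbb{F}_{q^2}$ if and only if $$(a,b)=\Big(\frac{s^q}{1+s^{1+q}},\,0\Big)$$ for some $s\in\mathbb{F}_{q^2}$ with $1+s^{1+q}\neq 0$.
   Context: A function $f:\mathbb{F}_{2^n}\to\mathbb{F}_{2^n}$ is called planar if for every $a\in\mathbb{F}_{2^n}^{*}$ the map $x\mapsto f(x+a)+f(x)+ax$ is a permutation of $\mathbb{F}_{2^n}$. *)

(* Defs.v *)
From HB Require Import structures.
From mathcomp Require Import all_boot all_order all_algebra all_field.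
Set Implicit Arguments. Unset Strict Implicit. Unset Printing Implicit Defensive.
Import GRing.Theory.
Local Open Scope ring_scope.

Definition planar (F : finFieldType) (f : F -> F) : Prop :=
  forall a : F, a != 0 -> bijective (fun x : F => f (x + a) + f x + a * x).

(* Main.v *)
Require Import Defs.
From HB Require Import structures.
From mathcomp Require Import all_boot all_order all_algebra all_field.
From mathcomp Require Import ring zify.
Import GRing.Theory.
Local Open Scope ring_scope.

Section Main.
Variables (F : finFieldType) (m : nat).
Hypothesis hm : (1 <= m)%N.
Hypothesis hF : #|F| = ((2 ^ m) ^ 2)%N.
Local Notation q := (2 ^ m)%N.

Lemma char2 : 2 \in [pchar F].
Proof. apply: (@card_finPcharP F 2 (m * 2)) => //. by rewrite hF expnM. Qed.

Lemma add2 (x : F) : x + x = 0. Proof. by apply: addrr_pchar2; apply: char2. Qed.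
Lemma opp2 (x : F) : - x = x. Proof. by apply: oppr_pchar2; apply: char2. Qed.
Lemma eq_mod2 (x y c : F) : x = y + c *+ 2 -> x = y.
Proof. by move=> ->; rewrite mulr2n add2 addr0. Qed.
Lemma sum0_eq (x y : F) : x + y = 0 -> x = y.
Proof. by move=> /eqP; rewrite addr_eq0 opp2 => /eqP. Qed.
Lemma eq_sum0 (x y : F) : x = y -> x + y = 0.
Proof. by move=> ->; rewrite add2. Qed.

Lemma sqrD (x y : F) : (x + y) ^+ 2 = x ^+ 2 + y ^+ 2.
Proof. by rewrite sqrrD mulr2n add2 addr0. Qed.

Lemma expD2 k (x y : F) : (x + y) ^+ (2 ^ k) = x ^+ (2 ^ k) + y ^+ (2 ^ k).
Proof.
elim: k => [|k IH]; first by rewrite !expr1.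
by rewrite expnSr !exprM IH sqrD.
Qed.

Lemma qD (x y : F) : (x + y) ^+ q = x ^+ q + y ^+ q. Proof. exact: expD2. Qed.
Lemma qq (x : F) : (x ^+ q) ^+ q = x.
Proof. by rewrite -exprM mulnn -hF expf_card. Qed.

Lemma q1 : (1 : F) ^+ q = 1. Proof. exact: expr1n. Qed.
Lemma q0 : (0 : F) ^+ q = 0. Proof. by rewrite expr0n expn_eq0. Qed.
Lemma qM (x y : F) : (x * y) ^+ q = x ^+ q * y ^+ q. Proof. exact: exprMn. Qed.
Lemma qV (x : F) : (x ^-1) ^+ q = (x ^+ q) ^-1. Proof. exact: exprVn. Qed.
Lemma qneq0 {x : F} : x != 0 -> x ^+ q != 0. Proof. by rewrite expf_eq0 negb_and orbC => ->. Qed.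
Lemma qsq (x : F) : (x ^+ 2) ^+ q = (x ^+ q) ^+ 2. Proof. exact: exprAC. Qed.

Definition tr (x : F) := x + x ^+ q.
Definition nm (x : F) := x * x ^+ q.

Lemma trq x : (tr x) ^+ q = tr x. Proof. by rewrite /tr qD qq addrC. Qed.
Lemma nmq x : (nm x) ^+ q = nm x. Proof. by rewrite /nm qM qq mulrC. Qed.
Lemma trD x y : tr (x + y) = tr x + tr y. Proof. rewrite /tr qD; ring. Qed.
Lemma trZ c x : c ^+ q = c -> tr (c * x) = c * tr x.
Proof. by move=> hc; rewrite /tr qM hc mulrDr. Qed.
Lemma tr0 : tr 0 = 0. Proof. by rewrite /tr q0 addr0. Qed.
Lemma tr1 : tr 1 = 0. Proof. by rewrite /tr q1 add2. Qed.
Lemma trqq x : tr (x ^+ q) = tr x. Proof. by rewrite /tr qq addrC. Qed.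
Lemma nmD x y : nm (x + y) = nm x + nm y + tr (x * y ^+ q).
Proof. rewrite /nm /tr qD qM qq; ring. Qed.
Lemma nmM x y : nm (x * y) = nm x * nm y. Proof. rewrite /nm qM; ring. Qed.
Lemma nmV x : nm (x ^-1) = (nm x)^-1. Proof. by rewrite /nm qV invfM. Qed.
Lemma nm_sq x : nm (x ^+ 2) = (nm x) ^+ 2. Proof. by rewrite /nm qsq exprMn. Qed.
Lemma nm_neq0 {x} : x != 0 -> nm x != 0. Proof. by move=> h; rewrite /nm mulf_neq0 // qneq0. Qed.
Lemma tr_nm x : tr (nm x) = 0. Proof. by rewrite /tr nmq add2. Qed.
Lemma fq_tr x : x ^+ q = x -> tr x = 0. Proof. by move=> h; rewrite /tr h add2. Qed.

Lemma sq_inj : injective (fun x : F => x ^+ 2).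
Proof.
move=> x y /= h; apply: sum0_eq.
have : (x + y) ^+ 2 == 0 by rewrite sqrD h add2.
by rewrite expf_eq0 /= => /eqP.
Qed.

Lemma sqrt_ex (c : F) : exists r : F, r ^+ 2 = c.
Proof. have [g _ gK] := injF_bij sq_inj. by exists (g c); rewrite gK. Qed.

Lemma sq_eq1 (x : F) : x ^+ 2 = 1 -> x = 1.
Proof. by move=> h; apply: sq_inj; rewrite /= h expr1n. Qed.

Definition fa (a b : F) := fun x : F => a * x ^+ q.+1 + b * x ^+ (2 * q.+1).
Definition L (a b u x : F) := u * x + a * tr (x * u ^+ q) + b * (tr (x * u ^+ q)) ^+ 2.

Lemma fa_nm a b x : fa a b x = a * nm x + b * (nm x) ^+ 2.
Proof. by rewrite /fa mulnC exprM exprS. Qed.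

Lemma Dexp a b u x :
  fa a b (x + u) + fa a b x + u * x = (fa a b (0 + u) + fa a b 0 + u * 0) + L a b u x.
Proof.
rewrite !fa_nm add0r /nm expr0n /= mul0r mulr0 expr0n /= !mulr0 !addr0.
rewrite -/(nm u) -/(nm x) -/(nm (x + u)) nmD /L !sqrD.
apply: (@eq_mod2 _ _ (a * nm x + b * nm x ^+ 2)); ring.
Qed.

Lemma L_add a b u x y : L a b u (x + y) = L a b u x + L a b u y.
Proof. rewrite /L mulrDl trD sqrD; ring. Qed.

Lemma planar_ker a b : planar (fa a b) ->
  forall u z, u != 0 -> L a b u z = 0 -> z = 0.
Proof.
move=> hp u z nu hz; have [g fg gf] := hp u nu.
apply: (can_inj fg); rewrite /= Dexp hz addr0.
by rewrite [in RHS]Dexp /L !mul0r tr0 expr0n /= !mulr0 !addr0.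
Qed.

Lemma ker_planar a b : (forall u z, u != 0 -> L a b u z = 0 -> z = 0) ->
  planar (fa a b).
Proof.
move=> hk u nu; apply: injF_bij => x y /=.
rewrite Dexp [in X in _ = X -> _]Dexp => /addrI h.
apply: sum0_eq; apply: (hk u) => //.
by rewrite L_add h add2.
Qed.

Lemma back a s : 1 + nm s != 0 -> a = s ^+ q / (1 + nm s) ->
  forall u z, u != 0 -> L a 0 u z = 0 -> z = 0.
Proof.
move=> nk ha u z nu; rewrite /L mul0r addr0.
set k := 1 + nm s in nk ha.
have kq : k ^+ q = k by rewrite /k qD q1 nmq.
set t := tr (z * u ^+ q).
have tq : t ^+ q = t by rewrite /t trq.
move/sum0_eq => huz.
have [t0|nt] := eqVneq t 0.
  by move: huz; rewrite t0 mulr0 => /eqP; rewrite mulf_eq0 (negbTE nu) /= => /eqP.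
have hz : z = a * t / u by rewrite -huz mulrC mulKf.
pose g := s * u / u ^+ q.
have nuq := @qneq0 u nu.
have gq : g ^+ q = s ^+ q * u ^+ q / u by rewrite /g !qM qV qq.
have hzu : z * u ^+ q = (t / k) * g ^+ q.
  by rewrite gq hz ha; field; rewrite nk nu.
have tkq : (t / k) ^+ q = t / k by rewrite qM qV tq kq.
have htg : tr g = k.
  have : t = (t / k) * tr g by rewrite {1}/t hzu trZ // trqq.
  move=> h; apply: (mulfI nt); rewrite [in RHS]h; field; by rewrite nk.
have ngs : g * g ^+ q = nm s by rewrite gq /g /nm; field; rewrite nu nuq.
have hfac : (g + 1) * (g + nm s) = 0.
  have e1 : (g + 1) * (g + nm s) = g * g + g * k + nm s by rewrite /k; ring.
  rewrite e1 -htg -ngs /tr.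
  apply: (@eq_mod2 _ _ (g * g + g * g ^+ q)); ring.
have gfix : g ^+ q = g.
  move/eqP: hfac; rewrite mulf_eq0 => /orP[] /eqP /sum0_eq ->.
    by rewrite q1.
  by rewrite nmq.
by move: nk; rewrite -htg fq_tr // eqxx.
Qed.

Lemma fixq_div (x y : F) : x ^+ q = x -> y ^+ q = y -> (x / y) ^+ q = x / y.
Proof. by move=> hx hy; rewrite qM qV hx hy. Qed.
Lemma fixq_mul (x y : F) : x ^+ q = x -> y ^+ q = y -> (x * y) ^+ q = x * y.
Proof. by move=> hx hy; rewrite qM hx hy. Qed.
Lemma fixq_exp (x : F) n : x ^+ q = x -> (x ^+ n) ^+ q = x ^+ n.
Proof. by move=> hx; rewrite exprAC hx. Qed.

Lemma nonplanar_w a b w r : w != 0 -> r != 0 -> r ^+ q = r ->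
  nm w * tr (a * w ^+ 2) + r * tr (b * w ^+ 2) = (nm w) ^+ 2 -> ~ planar (fa a b).
Proof.
move=> nw nr rq h hp.
have nN := nm_neq0 nw.
have Nq := nmq w.
set N := nm w in nN Nq h.
have nwq := @qneq0 w nw.
pose u := w^-1.
pose z := w * (a * r / N + b * r ^+ 2 / N ^+ 2).
have hzu : z * u ^+ q = (r / N ^+ 2) * (a * w ^+ 2) + (r ^+ 2 / N ^+ 3) * (b * w ^+ 2).
  rewrite /u qV /z /N /nm; field; by rewrite nw nwq.
have hT : tr (z * u ^+ q) = r / N.
  rewrite hzu trD (@trZ (r / N ^+ 2)); last by apply: fixq_div; [|apply: fixq_exp].
  rewrite (@trZ (r ^+ 2 / N ^+ 3)); last by apply: fixq_div; apply: fixq_exp.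
  have -> : r / N ^+ 2 * tr (a * w ^+ 2) + r ^+ 2 / N ^+ 3 * tr (b * w ^+ 2)
     = r / N ^+ 3 * (N * tr (a * w ^+ 2) + r * tr (b * w ^+ 2)) by field.
  by rewrite h; field.
have hL : L a b u z = 0.
  rewrite /L hT; apply: (@eq_mod2 _ _ (a * r / N + b * r ^+ 2 / N ^+ 2)).
  rewrite add0r /u /z; field; by rewrite nN nw.
have := @planar_ker a b hp u z (invr_neq0 nw) hL.
move=> z0; move: hT; rewrite z0 mul0r tr0 => /esym /eqP.
by rewrite mulf_eq0 invr_eq0 (negbTE nr) (negbTE nN).
Qed.

Lemma cond a b : planar (fa a b) -> forall w, w != 0 ->
  (tr (b * w ^+ 2) != 0 -> tr (a * w ^+ 2) = nm w) /\
  (tr (b * w ^+ 2) = 0 -> tr (a * w ^+ 2) != nm w).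
Proof.
move=> hp w nw; have nN := nm_neq0 nw.
set TA := tr (a * w ^+ 2); set TB := tr (b * w ^+ 2); set N := nm w in nN *.
have TAq : TA ^+ q = TA by rewrite trq.
have TBq : TB ^+ q = TB by rewrite trq.
have Nq : N ^+ q = N by rewrite nmq.
split.
  move=> nTB; apply/eqP; apply: contraT => nAN; exfalso.
  apply: (@nonplanar_w a b w ((N ^+ 2 + N * TA) / TB) nw).
  - rewrite mulf_neq0 ?invr_eq0 // expr2 -mulrDr mulf_neq0 //.
    by apply: contra nAN => /eqP /sum0_eq ->.
  - by apply: fixq_div => //; rewrite qD fixq_exp // fixq_mul.
  - rewrite mulfVK // /N /TA; apply: (@eq_mod2 _ _ (nm w * tr (a * w ^+ 2))); ring.
  - exact: hp.
move=> hTB; apply/negP => /eqP hTA.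
apply: (@nonplanar_w a b w 1 nw (oner_neq0 _) q1).
  by rewrite -/TA -/TB hTB hTA mulr0 addr0 expr2.
exact: hp.
Qed.

Lemma card_roots (p : {poly F}) (A : {set F}) : p != 0 ->
  (forall x, x \in A -> root p x) -> (#|A| < size p)%N.
Proof.
move=> np hA; rewrite cardE; apply: max_poly_roots => //.
  by apply/allP => x; rewrite mem_enum; exact: hA.
exact: enum_uniq.
Qed.

Lemma exists_nonfix n : (1 < n)%N -> (n < #|F|)%N -> exists x : F, x ^+ n != x.
Proof.
move=> n1 nF.
case: (boolP [forall x : F, x ^+ n == x]) => [/forallP h | /forallPn [x hx]]; last by exists x.
exfalso.
have sz : size ('X^n - 'X : {poly F}) = n.+1.
  by rewrite size_polyDl size_polyXn // size_polyN size_polyX ltnS.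
have np : ('X^n - 'X : {poly F}) != 0 by rewrite -size_poly_gt0 sz.
suff: (#|[set: F]| < n.+1)%N by rewrite cardsT ltnS leqNgt nF.
rewrite -sz; apply: card_roots np _ => x _.
by rewrite rootE hornerD hornerN hornerXn hornerX subr_eq0 h.
Qed.

Lemma q_ge4 : (2 <= m)%N -> (4 <= q)%N.
Proof. by move=> h; rewrite -[4%N]/(2 ^ 2)%N leq_exp2l. Qed.

Lemma b0 a b : (2 <= m)%N -> planar (fa a b) -> b = 0.
Proof.
move=> hm2 hp; apply/eqP; apply: contraT => nb; exfalso.
have q4 := q_ge4 hm2.
have cF : #|F| = (q * q)%N by rewrite hF mulnn.
have [c0 hc0] : exists c, tr c != 0.
  have [x hx] : exists x : F, x ^+ q != x.
    by apply: exists_nonfix; [lia | rewrite cF; nia].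
  exists x; apply: contra hx => /eqP /sum0_eq <-; by [].
have [x hx] : exists x : F, x ^+ q.+2 != x.
  by apply: exists_nonfix; [lia | rewrite cF; nia].
have nx : x != 0 by apply: contra hx => /eqP ->; rewrite expr0n.
have nl1 : nm x != 1.
  by apply: contra hx => /eqP h; rewrite exprS exprS -/(nm x) h mulr1.
set l := nm x in nl1.
have lq : l ^+ q = l by rewrite /l nmq.
have nl0 : l != 0 by rewrite /l nm_neq0.
pose P w := tr (b * w ^+ 2).
pose Q w := tr (a * w ^+ 2) + nm w.
have P0 : P 0 = 0 by rewrite /P expr0n mulr0 tr0.
have hP1 : forall w, P w != 0 -> Q w = 0.
  move=> w hw; have nw : w != 0 by apply: contra hw => /eqP ->; rewrite P0.
  by rewrite /Q ((@cond a b hp w nw).1 hw) add2.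
have hP2 : forall w, w != 0 -> P w = 0 -> Q w != 0.
  move=> w nw hw; apply: contra ((@cond a b hp w nw).2 hw) => /eqP h.
  by apply/eqP; apply: sum0_eq.
have PD : forall y z, P (y + z) = P y + P z.
  by move=> y z; rewrite /P sqrD mulrDr trD.
have PZ : forall c y, c ^+ q = c -> P (c * y) = c ^+ 2 * P y.
  move=> c y hc; rewrite /P exprMn mulrCA (@trZ (c ^+ 2)) //; exact: fixq_exp.
have QD : forall y z, Q (y + z) = Q y + Q z + tr (y * z ^+ q).
  by move=> y z; rewrite /Q sqrD mulrDr trD nmD; ring.
have claim : forall y h, P y != 0 -> P h = 0 -> tr (y * h ^+ q) = 0.
  move=> y h Py Ph.
  pose w2 := l * y + h.
  have Pw2 : P w2 != 0.
    by rewrite /w2 PD Ph addr0 PZ // mulf_neq0 // expf_neq0.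
  have l1 : 1 + l != 0 by apply: contra nl1 => /eqP /sum0_eq <-.
  have l1q : (1 + l) ^+ q = 1 + l by rewrite qD q1 lq.
  have Pyw : P (y + w2) != 0.
    have -> : y + w2 = (1 + l) * y + h by rewrite /w2; ring.
    by rewrite PD Ph addr0 PZ // mulf_neq0 // expf_neq0.
  have := QD y w2; rewrite (hP1 _ Pyw) (hP1 _ Py) (hP1 _ Pw2) !add0r => /esym.
  rewrite /w2 qD qM lq mulrDr mulrCA -/(nm y) trD (@trZ l) // tr_nm mulr0 add0r.
  by [].
have [h0 h0e] := sqrt_ex b^-1.
have Ph0 : P h0 = 0 by rewrite /P h0e mulfV // tr1.
have nh0 : h0 != 0.
  by apply: contra nb => /eqP h; move: h0e; rewrite h expr0n /= => /esym /eqP; rewrite invr_eq0.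
have [x1 x1e] := sqrt_ex (c0 / b).
have Px1 : P x1 != 0 by rewrite /P x1e mulrC mulfVK.
have nh0q := @qneq0 h0 nh0.
pose xc := c0 / h0 ^+ q.
have hxc : xc * h0 ^+ q = c0 by rewrite /xc mulfVK.
have [Pxc|Pxc] := eqVneq (P xc) 0.
  have Ps : P (xc + x1) != 0 by rewrite PD Pxc add0r.
  have := claim _ _ Ps Ph0; rewrite mulrDl trD hxc (claim _ _ Px1 Ph0) addr0.
  by move/eqP; rewrite (negbTE hc0).
by move: (claim _ _ Pxc Ph0); rewrite hxc => /eqP; rewrite (negbTE hc0).
Qed.

Definition AT (z : F) := \sum_(i < 2 * m) z ^+ (2 ^ i).

Lemma AT_fix A : A ^+ q = A -> AT A = 0.
Proof.
move=> hA; rewrite /AT mul2n -addnn big_split_ord /=.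
have -> : \sum_(i < m) A ^+ (2 ^ (rshift m i)) = \sum_(i < m) A ^+ (2 ^ (lshift m i)).
  by apply: eq_bigr => i _; rewrite /= expnD exprM hA.
exact: add2.
Qed.

Lemma AT_psi y : AT (y ^+ 2 + y) = 0.
Proof.
rewrite /AT.
have -> : \sum_(i < 2 * m) (y ^+ 2 + y) ^+ (2 ^ i)
   = \sum_(0 <= i < 2 * m) (y ^+ (2 ^ i.+1) - y ^+ (2 ^ i)).
  rewrite big_mkord; apply: eq_bigr => i _.
  by rewrite expD2 -exprM -expnS opp2.
by rewrite telescope_sumr // expn0 expr1 mulnC expnM -hF expf_card subrr.
Qed.

Lemma card_AT n : (#|[set z : F | (\sum_(i < n.+1) z ^+ (2 ^ i) == 0)%R]| <= 2 ^ n)%N.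
Proof.
pose p : {poly F} := \sum_(i < n.+1) 'X^(2 ^ i).
have sz : size p = (2 ^ n).+1.
  rewrite /p big_ord_recr /= addrC size_polyDl size_polyXn //.
  rewrite ltnS.
  apply: (big_ind (fun p : {poly F} => size p <= 2 ^ n)%N).
  - by rewrite size_poly0.
  - move=> p1 p2 h1 h2; apply: leq_trans (size_polyD _ _) _; by rewrite geq_max h1 h2.
  - by move=> i _; rewrite size_polyXn ltn_exp2l.
have np : p != 0 by rewrite -size_poly_gt0 sz.
rewrite -ltnS -sz; apply: card_roots np _ => z.
rewrite inE => /eqP h; rewrite rootE /p horner_sum.
rewrite (eq_bigr (fun i : 'I_n.+1 => z ^+ (2 ^ i))) ?h //.
by move=> i _; rewrite hornerXn.
Qed.

Lemma psi_surj A : AT A = 0 -> exists y : F, y ^+ 2 + y = A.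
Proof.
move=> hA.
pose S := [set y : F | (enum_rank y < enum_rank (y + 1)%R)%N].
have y11 : forall y : F, y + 1 + 1 = y by move=> y; rewrite -addrA add2 addr0.
have memS : forall y, (y \in S) = (y + 1 \notin S).
  move=> y; rewrite !inE y11.
  have ne : (enum_rank y : nat) != enum_rank (y + 1)%R.
    apply/negP => /eqP /val_inj /enum_rank_inj /esym /eqP.
    by rewrite -subr_eq0 addrAC subrr add0r oner_eq0.
  by rewrite ltn_neqAle -leqNgt ne.
have cS : #|~: S| = #|S|.
  have -> : ~: S = (fun y => y + 1) @^-1: S.
    by apply/setP => y; rewrite in_setC memS negbK !inE.
  by apply: card_preimset; exact: addIr.
have c2 : (#|S| * 2 = #|F|)%N by rewrite -(cardsC S) cS muln2 addnn.
pose psi y : F := y ^+ 2 + y.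
have inj : {in S &, injective psi}.
  move=> y z yS zS h.
  have : (y + z) * (y + z + 1) = 0.
    have -> : (y + z) * (y + z + 1) = (y + z) ^+ 2 + (y + z) by ring.
    rewrite sqrD; have -> : y ^+ 2 + z ^+ 2 + (y + z) = psi y + psi z by rewrite /psi; ring.
    by rewrite h add2.
  move/eqP; rewrite mulf_eq0 => /orP[/eqP/sum0_eq //|/eqP/sum0_eq hyz].
  have ez : z = y + 1 by apply: (addrI y); rewrite hyz addrA add2 add0r.
  by move: zS; rewrite ez; move: yS; rewrite memS => /negbTE ->.
pose K := [set z : F | (\sum_(i < ((2 * m).-1).+1) z ^+ (2 ^ i) == 0)%R].
have cK := card_AT ((2 * m).-1).
have e2m : ((2 * m).-1).+1 = (2 * m)%N by rewrite prednK // muln_gt0.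
have sub : psi @: S \subset K.
  apply/subsetP => z /imsetP [y _ ->]; rewrite inE.
  by move: (AT_psi y); rewrite /AT -e2m => ->.
have cF2 : #|F| = (2 ^ ((2 * m).-1) * 2)%N.
  by rewrite hF -expnSr e2m mulnC expnM.
have cSv : #|S| = (2 ^ ((2 * m).-1))%N.
  by apply/eqP; rewrite -(eqn_pmul2r (isT : (0 < 2)%N)) c2 cF2.
have eK : psi @: S = K.
  apply/eqP; rewrite eqEcard sub /= (card_in_imset inj) cSv; exact: cK.
have : A \in K by rewrite inE; move: hA; rewrite /AT -e2m => ->.
by rewrite -eK => /imsetP [y _ ->]; exists y.
Qed.

Lemma sE (s : F) : s ^+ (1 + q) = nm s. Proof. by rewrite add1n exprS. Qed.

Lemma sexists a : planar (fa a 0) ->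
  exists s : F, 1 + s ^+ (1 + q) != 0 /\ a = s ^+ q / (1 + s ^+ (1 + q)).
Proof.
move=> hp.
have hc : forall w, w != 0 -> tr (a * w ^+ 2) != nm w.
  by move=> w nw; apply: ((@cond a 0 hp w nw).2); rewrite mul0r tr0.
have [->|na] := eqVneq a 0.
  by exists 0; rewrite sE /nm mul0r addr0 q0 mul0r oner_neq0.
have nA := nm_neq0 na.
have Aq := nmq a.
set A := nm a in nA Aq.
case: (boolP [exists k : F, (k ^+ q == k) && (k ^+ 2 + k + A == 0)]) =>
   [/existsP [k /andP [/eqP kq /eqP hk]] | hno].
  have hAk : A = k ^+ 2 + k by apply: esym; apply: sum0_eq.
  pose n := k ^+ 2 / A.
  have nq : n ^+ q = n by apply: fixq_div => //; apply: fixq_exp.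
  pose s := a ^+ q * (1 + n).
  have sq : s ^+ q = a * (1 + n) by rewrite /s qM qq qD q1 nq.
  have nk : k ^+ 2 + k != 0 by rewrite -hAk.
  have nms : nm s = n.
    have -> : nm s = A * (1 + n) ^+ 2 by rewrite /nm sq /s /A /nm; ring.
    rewrite /n hAk; apply: (@eq_mod2 _ _ (k ^+ 2 *+ 2)).
    by field.
  have n1 : n != 1.
    apply/eqP => h1.
    have kA : k ^+ 2 = A by move: h1; rewrite /n => /eqP; rewrite -(divff nA) => /eqP /(mulIf (invr_neq0 nA)).
    have k0 : k = 0.
      by apply: (addrI (k ^+ 2)); rewrite addr0 {2}kA hAk.
    by move: nA; rewrite -kA k0 expr0n eqxx.
  exists s; rewrite sE nms; split.
    by apply: contra n1 => /eqP /sum0_eq <-.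
  rewrite sq mulfK //.
  by apply: contra n1 => /eqP /sum0_eq <-.
exfalso.
have [y hy] := @psi_surj A (@AT_fix A Aq).
have hyq : y ^+ q != y.
  apply/negP => /eqP hyq; move/negP: hno; apply; apply/existsP; exists y.
  by rewrite hyq eqxx /= hy add2.
have zq : (y ^+ q) ^+ 2 + y ^+ q = A by rewrite -qsq -qD hy Aq.
have yq1 : y ^+ q = y + 1.
  set z := y ^+ q in hyq zq *.
  have : (z + y) * (z + y + 1) = 0.
    have -> : (z + y) * (z + y + 1) = (z ^+ 2 + z) + (y ^+ 2 + y) + (z * y) *+ 2 by ring.
    by rewrite zq hy add2 mulr2n add2 addr0.
  move/eqP; rewrite mulf_eq0 => /orP[/eqP/sum0_eq hzy|/eqP/sum0_eq hzy].
    by move: hyq; rewrite hzy eqxx.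
  by rewrite -hzy addrCA add2 addr0.
have ny : y != 0 by apply: contra hyq => /eqP ->; rewrite q0.
have [w hw] := sqrt_ex (y / a).
have nw : w != 0.
  apply: contra ny => /eqP w0; move: hw; rewrite w0 expr0n /= => /esym /eqP.
  by rewrite mulf_eq0 invr_eq0 (negbTE na) orbF.
have t1 : tr (a * w ^+ 2) = 1.
  by rewrite hw mulrC mulfVK // /tr yq1 addrA add2 add0r.
have n1 : nm w = 1.
  apply: sq_eq1; rewrite -nm_sq hw nmM nmV -/A.
  have -> : nm y = A by rewrite /nm yq1 -hy; ring.
  exact: divff.
by move: (hc w nw); rewrite t1 n1 eqxx.
Qed.
End Main.

Theorem theorem1 :
  exists m0 : nat, forall m : nat, (m0 <= m)%N ->
  forall (F : finFieldType), #|F| = ((2 ^ m) ^ 2)%N ->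
  forall a b : F,
    planar (fun x : F => a * x ^+ (2 ^ m).+1 + b * x ^+ (2 * (2 ^ m).+1)) <->
    exists s : F, 1 + s ^+ (1 + 2 ^ m) != 0 /\
      a = s ^+ (2 ^ m) / (1 + s ^+ (1 + 2 ^ m)) /\ b = 0.
Proof.
exists 2%N => m hm2 F hF a b.
have hm1 : (1 <= m)%N by apply: ltnW.
split.
  move=> hp.
  have hb : b = 0 := @b0 F m hm1 hF a b hm2 hp.
  subst b.
  have [s [h1 h2]] := @sexists F m hm1 hF a hp.
  by exists s.
move=> [s [h1 [h2 ->]]].
apply: (@ker_planar F m hF a 0).
rewrite (@sE F m) in h1 h2.
exact: (@back F m hF a s h1 h2).
Qed.
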